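(* Let $f$ be a homeomorphism of a compact metric space $X$. If $f$ is positively finite-expansive and has the shadowing property, then $X$ is finite.
   Context: $f$ is positively finite-expansive if there is $c>0$ such that $W^s_c(x)=\{y\in X: d(f^n(x),f^n(y))\le c\ \forall n\ge 0\}$ is finite for every $x\in X$. Shadowing: for every $\varepsilon>0$ there is $\delta>0$ such that for every sequence $(x_k)_{k\in\mathbb{Z}}$ with $d(f(x_k),x_{k+1})<\delta$ for all $k$ there is $y$ with $d(f^k(y),x_k)<\varepsilon$ for all $k\in\mathbb{Z}$. *)

(* Defs.v *)
From Stdlib Require Import Reals List.
Open Scope R_scope.

Record is_metric {X : Type} (d : X -> X -> R) : Prop := {
  dist_nonneg : forall x y, 0 <= d x y;
  dist_eq0 : forall x y, d x y = 0 <-> x = y;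
  dist_sym : forall x y, d x y = d y x;
  dist_tri : forall x y z, d x z <= d x y + d y z
}.

Definition open_set {X : Type} (d : X -> X -> R) (U : X -> Prop) : Prop :=
  forall x, U x -> exists r, 0 < r /\ forall y, d x y < r -> U y.

Definition compact_space {X : Type} (d : X -> X -> R) : Prop :=
  forall (I : Type) (U : I -> X -> Prop),
    (forall i, open_set d (U i)) ->
    (forall x, exists i, U i x) ->
    exists l : list I, forall x, exists i, In i l /\ U i x.

Definition continuous_map {X : Type} (d : X -> X -> R) (f : X -> X) : Prop :=
  forall x eps, 0 < eps -> exists delta, 0 < delta /\
    forall y, d x y < delta -> d (f x) (f y) < eps.

Definition homeomorphism {X : Type} (d : X -> X -> R) (f : X -> X) : Prop :=
  continuous_map d f /\
  exists g : X -> X, continuous_map d g /\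
    (forall x, g (f x) = x) /\ (forall x, f (g x) = x).

Definition finite_pred {X : Type} (P : X -> Prop) : Prop :=
  exists l : list X, forall y, P y -> In y l.

Definition finite_type (X : Type) : Prop :=
  exists l : list X, forall y : X, In y l.

Definition stable_set {X : Type} (d : X -> X -> R) (f : X -> X) (c : R) (x : X)
  : X -> Prop :=
  fun y => forall n : nat, d (Nat.iter n f x) (Nat.iter n f y) <= c.

Definition pos_finite_expansive {X : Type} (d : X -> X -> R) (f : X -> X) : Prop :=
  exists c, 0 < c /\ forall x, finite_pred (stable_set d f c x).

(* f^k for k : Z, given f bijective with inverse g. *)
Definition zpow {X : Type} (f g : X -> X) (k : Z) (x : X) : X :=
  match k with
  | Z0 => x
  | Zpos p => Nat.iter (Pos.to_nat p) f x
  | Zneg p => Nat.iter (Pos.to_nat p) g x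
  end.

Definition shadowing {X : Type} (d : X -> X -> R) (f g : X -> X) : Prop :=
  forall eps, 0 < eps -> exists delta, 0 < delta /\
    forall xs : Z -> X, (forall k, d (f (xs k)) (xs (k + 1)%Z) < delta) ->
      exists y, forall k, d (zpow f g k y) (xs k) < eps.

(* Main.v *)
Require Import Defs.
From Stdlib Require Import Reals List.
From Stdlib Require Import Lra Lia Classical ZArith.
Open Scope R_scope.

Lemma iter_succ_r {A} (h : A -> A) n x : Nat.iter (S n) h x = Nat.iter n h (h x).
Proof. induction n; simpl in *; [reflexivity| rewrite <- IHn; reflexivity]. Qed.

Lemma iter_back {X} (f g : X -> X) (gf : forall x, g (f x) = x) j t x :
  Nat.iter j g (Nat.iter (j + t) f x) = Nat.iter t f x.
Proof.
  induction j as [|j IH]; [reflexivity|].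
  rewrite iter_succ_r. replace (S j + t)%nat with (S (j + t)) by lia.
  simpl. rewrite gf. exact IH.
Qed.

Lemma zpow_nat {X} (f g : X -> X) n x : zpow f g (Z.of_nat n) x = Nat.iter n f x.
Proof. destruct n; [reflexivity|]. simpl. rewrite SuccNat2Pos.id_succ. reflexivity. Qed.

Lemma zpow_negnat {X} (f g : X -> X) n x :
  zpow f g (Z.neg (Pos.of_succ_nat n)) x = Nat.iter (S n) g x.
Proof. simpl. rewrite SuccNat2Pos.id_succ. reflexivity. Qed.

Lemma union_lists {X} (P : X -> X -> Prop) (H : forall x, finite_pred (P x)) (lc : list X) :
  exists L, forall p y, In p lc -> P p y -> In y L.
Proof.
  induction lc as [|p lc IH].
  - exists nil. intros p y [].
  - destruct IH as [L HL]. destruct (H p) as [l Hl].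
    exists (l ++ L). intros q y [<-|Hq] Hy; apply in_or_app; [left; auto | right; eauto].
Qed.

Lemma bound_list {A} (Q : A -> nat -> Prop) (l : list A) :
  (forall x, In x l -> exists t, Q x t) ->
  exists n, forall x, In x l -> exists t, (t < n)%nat /\ Q x t.
Proof.
  induction l as [|a l IH]; intros H.
  - exists 0%nat. intros x [].
  - destruct (H a (or_introl eq_refl)) as [t0 Ht0].
    destruct IH as [n0 Hn0]. { intros x Hx; apply H; right; auto. }
    exists (Nat.max n0 (S t0)). intros x [<-|Hx].
    + exists t0; split; [lia|auto].
    + destruct (Hn0 x Hx) as [t [Ht1 Ht2]]; exists t; split; [lia|auto].
Qed.

Lemma bound_pairs {X} (P : X -> X -> nat -> Prop) (S : list X) :
  (forall a b, In a S -> In b S -> a <> b -> exists t, P a b t) ->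
  exists n, forall a b, In a S -> In b S -> a <> b -> exists t, (t < n)%nat /\ P a b t.
Proof.
  intros H.
  destruct (bound_list (fun ab t => fst ab <> snd ab -> P (fst ab) (snd ab) t)
              (list_prod S S)) as [n Hn].
  - intros [a b] Hab. apply in_prod_iff in Hab as [Ha Hb]. simpl.
    destruct (classic (a = b)) as [->|Hne].
    + exists 0%nat. intros C; now contradiction C.
    + destruct (H a b Ha Hb Hne) as [t Ht]. exists t; auto.
  - exists n. intros a b Ha Hb Hne.
    destruct (Hn (a,b)) as [t [Ht1 Ht2]]. { apply in_prod; auto. }
    exists t; split; auto.
Qed.

Lemma forall2_exists {A B} (R : A -> B -> Prop) (l : list A) :
  (forall a, In a l -> exists b, R a b) -> exists lb, Forall2 R l lb.
Proof.
  induction l as [|a l IH]; intros H.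
  - exists nil; constructor.
  - destruct (H a (or_introl eq_refl)) as [b Hb].
    destruct IH as [lb Hlb]. { intros x Hx; apply H; right; auto. }
    exists (b :: lb); constructor; auto.
Qed.

Lemma forall2_in_r {A B} (R : A -> B -> Prop) l lb b :
  Forall2 R l lb -> In b lb -> exists a, In a l /\ R a b.
Proof.
  intros HF; induction HF as [|a b' l lb' Hab HF IH]; intros Hin; [destruct Hin|].
  destruct Hin as [<-|Hin]; [exists a; split; [left|]; auto|].
  destruct (IH Hin) as [a' [Ha' Hr]]; exists a'; split; [right|]; auto.
Qed.

Lemma forall2_nodup {A B} (R : A -> B -> Prop) l lb :
  NoDup l -> (forall a a' b, In a l -> In a' l -> R a b -> R a' b -> a = a') ->
  Forall2 R l lb -> NoDup lb.
Proof.
  intros Hnd Hinj HF. induction HF as [|a b l lb Hab HF IH]; constructor.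
  - intros Hb. destruct (forall2_in_r _ _ _ _ HF Hb) as [a' [Ha' Hr]].
    assert (a = a') as <-.
    { apply (Hinj a a' b); [left|right|..]; auto. }
    inversion Hnd; contradiction.
  - apply IH. { inversion Hnd; auto. } intros x x' y Hx Hx'; apply Hinj; right; auto.
Qed.

Lemma build_sep {X} (d : X -> X -> R) (f : X -> X) c :
  is_metric d -> 0 < c -> (forall x, finite_pred (stable_set d f c x)) -> ~ finite_type X ->
  forall m, exists S, length S = m /\ NoDup S /\
    forall a b, In a S -> In b S -> a <> b -> exists t, c < d (Nat.iter t f a) (Nat.iter t f b).
Proof.
  intros Hm Hc Hfin Hinf m. induction m as [|m IH].
  - exists nil; repeat split; [constructor| intros a b []].
  - destruct IH as [S [Hlen [Hnd Hsep]]].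
    destruct (union_lists (stable_set d f c) Hfin S) as [L HL].
    assert (exists u, forall s, In s S -> ~ stable_set d f c s u) as [u Hu].
    { apply NNPP; intros Hno. apply Hinf. exists L. intros y.
      apply NNPP; intros Hy. apply Hno. exists y. intros s Hs Hst. apply Hy. eapply HL; eauto. }
    assert (Hsu : forall s, In s S -> exists t, c < d (Nat.iter t f s) (Nat.iter t f u)).
    { intros s Hs. specialize (Hu s Hs). unfold stable_set in Hu.
      apply not_all_ex_not in Hu as [t Ht]. exists t. lra. }
    exists (u :: S). split; [simpl; lia|]. split.
    + constructor; auto. intros HuS. apply (Hu u HuS). intros n.
      rewrite (proj2 (Defs.dist_eq0 d Hm _ _) eq_refl). lra.
    + intros a b [<-|Ha] [<-|Hb] Hab.
      * contradiction.
      * destruct (Hsu b Hb) as [t Ht]; exists t. rewrite (Defs.dist_sym d Hm); auto.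
      * destruct (Hsu a Ha) as [t Ht]; exists t. auto.
      * auto.
Qed.

Theorem theoremF (X : Type) (d : X -> X -> R) (f g : X -> X) :
  is_metric d ->
  compact_space d ->
  homeomorphism d f ->
  (forall x, g (f x) = x) -> (forall x, f (g x) = x) ->
  pos_finite_expansive d f ->
  shadowing d f g ->
  finite_type X.
Proof.
  intros Hm Hcomp Hhom gf fg [c [Hc Hfin]] Hsh.
  assert (Hd0 : forall z, d z z = 0) by (intros z; apply (Defs.dist_eq0 d Hm); reflexivity).
  apply NNPP; intros Hinf.
  destruct (Hsh (c/2)) as [delta [Hdel Hshd]]; [lra|].
  destruct (Hcomp X (fun p v => d p v < delta)) as [lc Hlc].
  { intros p x Hx. exists (delta - d p x). split; [lra|]. intros y Hy.
    pose proof (Defs.dist_tri d Hm p x y). lra. }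
  { intros x. exists x. rewrite Hd0. lra. }
  destruct (union_lists (stable_set d f c) Hfin lc) as [L0 HL0].
  destruct (build_sep d f c Hm Hc Hfin Hinf (S (length L0))) as [Sl [Hlen [Hnd Hsep]]].
  destruct (bound_pairs (fun a b t => c < d (Nat.iter t f a) (Nat.iter t f b)) Sl Hsep)
    as [n Hn].
  set (Rel := fun a y => In a Sl /\ In y L0 /\ forall j, (1 <= j)%nat ->
        d (Nat.iter j g y) (Nat.iter j g (Nat.iter n f a)) < c/2).
  destruct (forall2_exists Rel Sl) as [ys Hys].
  { intros a Ha.
    set (v := Nat.iter n f a).
    destruct (Hlc v) as [p [Hp Hpv]].
    set (xs := fun k : Z => match k with Z.neg q => Nat.iter (Pos.to_nat q) g v
                                    | _ => zpow f g k p end).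
    assert (Hxpos : forall m, xs (Z.of_nat m) = Nat.iter m f p).
    { intros m; destruct m; [reflexivity|]. exact (zpow_nat f g (S m) p). }
    assert (Hxneg : forall m, xs (- Z.of_nat (S m))%Z = Nat.iter (S m) g v).
    { intros m. exact (zpow_negnat f g m v). }
    destruct (Hshd xs) as [y Hy].
    { intros k. destruct (Z_lt_le_dec k (-1)%Z) as [Hk|Hk].
      - set (m := Z.to_nat (- k - 2)).
        replace k with (- Z.of_nat (S (S m)))%Z by (unfold m; lia).
        replace (- Z.of_nat (S (S m)) + 1)%Z with (- Z.of_nat (S m))%Z by lia.
        rewrite !Hxneg. change (Nat.iter (S (S m)) g v) with (g (Nat.iter (S m) g v)).
        rewrite fg, Hd0. lra.
      - destruct (Z.eq_dec k (-1)) as [->|Hk2].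
        + replace (-1 + 1)%Z with (Z.of_nat 0) by reflexivity.
          replace (-1)%Z with (- Z.of_nat 1)%Z by reflexivity.
          rewrite Hxneg, Hxpos. simpl. rewrite fg, (Defs.dist_sym d Hm). exact Hpv.
        + set (m := Z.to_nat k). replace k with (Z.of_nat m) by (unfold m; lia).
          replace (Z.of_nat m + 1)%Z with (Z.of_nat (S m)) by lia. rewrite !Hxpos.
          simpl. rewrite Hd0; lra. }
    exists y. split; [auto|]. split.
    - eapply HL0; [exact Hp|]. intros k. specialize (Hy (Z.of_nat k)).
      rewrite zpow_nat, Hxpos in Hy. rewrite (Defs.dist_sym d Hm). lra.
    - intros j Hj. destruct j as [|j]; [lia|].
      specialize (Hy (Z.neg (Pos.of_succ_nat j))). rewrite zpow_negnat in Hy.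
      replace (Z.neg (Pos.of_succ_nat j)) with (- Z.of_nat (S j))%Z in Hy by reflexivity.
      rewrite Hxneg in Hy. exact Hy. }
  assert (Hinc : incl ys L0).
  { intros y Hy. destruct (forall2_in_r _ _ _ _ Hys Hy) as [a [_ [_ [H _]]]]. auto. }
  assert (Hndy : NoDup ys).
  { apply (forall2_nodup Rel Sl ys Hnd); auto.
    intros a a' y Ha Ha' [_ [_ H1]] [_ [_ H2]]. apply NNPP; intros Hne.
    destruct (Hn a a' Ha Ha' Hne) as [t [Ht Hct]].
    specialize (H1 (n - t)%nat ltac:(lia)). specialize (H2 (n - t)%nat ltac:(lia)).
    assert (Hb : forall z, Nat.iter (n - t) g (Nat.iter n f z) = Nat.iter t f z).
    { intros z. pose proof (iter_back f g gf (n - t) t z) as E. replace (n - t + t)%nat with n in E by lia. exact E. }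
    rewrite Hb in H1, H2.
    pose proof (Defs.dist_tri d Hm (Nat.iter t f a) (Nat.iter (n - t) g y) (Nat.iter t f a')) as HT.
    rewrite (Defs.dist_sym d Hm (Nat.iter t f a) (Nat.iter (n - t) g y)) in HT. lra. }
  pose proof (NoDup_incl_length Hndy Hinc). pose proof (Forall2_length Hys). lia.
Qed.
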